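(* Let $\lambda>0$ be fixed, and assume there are constants $C_d>C_u>0$ and events $\mathcal{B}_N$ on the predictor sample, with $\mathbb{P}(\mathcal{B}_N)\to1$, such that on $\mathcal{B}_N$, with $K_0=\lfloor\ln(N)/(2C_d+1)\rfloor$, the eigenvalues $\widehat\mu_1\ge\dots\ge\widehat\mu_N$ of the Gram matrix satisfy $$\sum_{k=K_0}^N\widehat\mu_k\le\sum_{k=K_0}^Ne^{-C_uk}\quad\text{and}\quad\widehat\mu_{K_0}\ge e^{-C_dK_0}.$$ Then for $m=m(N)=N^{\frac14\frac{C_u+C_d+1/2}{C_d+1}}$, on $\mathcal{B}_N$, $$\frac1{\sqrt N}\sum_{\ell=1}^N\Big(1-\Big(1-\frac{\widehat\mu_\ell}{\widehat\mu_\ell+\lambda}\Big)^m\Big)^2\to0\qquad(N\to\infty).$$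
   Context: Gram matrix: $G_{ij}=K(\widetilde{\mathbf{x}}_i,\widetilde{\mathbf{x}}_j)/N$ for the additive kernel $K(\mathbf{x},\mathbf{x}')=\sum_{j=1}^d\exp(-|x_j-x_j'|^2/(2\varsigma_j))$ evaluated at the sample $\widetilde{\mathbf{x}}_1,\dots,\widetilde{\mathbf{x}}_N\in\mathbb{R}^d$. *)

(* Defs.v *)
From HB Require Import structures.
From mathcomp Require Import all_boot all_order all_algebra.
From mathcomp Require Import all_classical all_reals all_analysis.
Set Implicit Arguments. Unset Strict Implicit. Unset Printing Implicit Defensive.
Import Order.TTheory GRing.Theory Num.Theory.
Local Open Scope ring_scope.

Definition addkernel (R : realType) (d : nat) (s : 'I_d -> R)
    (x x' : 'rV[R]_d) : R :=
  \sum_(j < d) expR (- ((x 0 j - x' 0 j) ^+ 2) / (2 * s j)).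

Definition gram (R : realType) (d N : nat) (s : 'I_d -> R)
    (x : 'I_N -> 'rV[R]_d) : 'M[R]_N :=
  \matrix_(i, j) (addkernel s (x i) (x j) / N%:R).

(* Only the values mu 1, ..., mu N are meaningful. *)
Definition sorted_eigenvalues (R : realType) (N : nat) (G : 'M[R]_N)
    (mu : nat -> R) : Prop :=
  (forall k, (1 <= k)%N -> (k < N)%N -> mu k.+1 <= mu k) /\
  exists U : 'M[R]_N, U *m U^T = 1%:M /\
    G = U^T *m diag_mx (\row_(i < N) mu i.+1) *m U.

Definition K0 (R : realType) (Cd : R) (N : nat) : nat :=
  Num.truncn (ln (N%:R : R) / (2 * Cd + 1)).

Definition mN (R : realType) (Cu Cd : R) (N : nat) : R :=
  (N%:R : R) `^ (4^-1 * ((Cu + Cd + 2^-1) / (Cd + 1))).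

Definition effquant (R : realType) (lam : R) (m : R) (N : nat)
    (mu : nat -> R) : R :=
  (Num.sqrt (N%:R : R))^-1 *
  \sum_(1 <= l < N.+1) (1 - (1 - mu l / (mu l + lam)) `^ m) ^+ 2.

(* Main.v *)
Require Import Defs.
From HB Require Import structures.
From mathcomp Require Import all_boot all_order all_algebra.
From mathcomp Require Import all_classical all_reals all_analysis.
From mathcomp Require Import ring lra.
Import Order.TTheory GRing.Theory Num.Theory.
Import numFieldNormedType.Exports.
Local Open Scope classical_set_scope.
Local Open Scope ring_scope.



Section S.
Variable R : realType.

Lemma cvg_finsum (I : Type) (r : seq I) (u : I -> nat -> R) (l : I -> R) :
  (forall i, u i n @[n --> \oo] --> l i) ->
  \sum_(i <- r) u i n @[n --> \oo] --> \sum_(i <- r) l i.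
Proof.
move=> H; elim: r => [|i r IH].
  rewrite big_nil; under eq_cvg do rewrite big_nil; exact: cvg_cst.
rewrite big_cons; under eq_cvg do rewrite big_cons.
exact: cvgD.
Qed.

Lemma exp_psd n (w a : 'I_n -> R) (t : R) : 0 <= t ->
  0 <= \sum_i \sum_j w i * w j * expR (t * a i * a j).
Proof.
move=> t0.
pose f k := \sum_i \sum_j w i * w j * series (exp_coeff (t * a i * a j)) k.
have cf : f k @[k --> \oo] --> \sum_i \sum_j w i * w j * expR (t * a i * a j).
  apply: cvg_finsum => i; apply: cvg_finsum => j.
  apply: cvgMl_tmp; exact: (is_cvg_series_exp_coeff _).
rewrite -(cvg_lim _ cf) //; apply: limr_ge; first by apply/cvg_ex; eexists; exact: cf.
near=> k.
rewrite /f /series /=.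
under eq_bigr do under eq_bigr do rewrite big_distrr /=.
under eq_bigr do rewrite exchange_big /=.
rewrite exchange_big /=; apply: sumr_ge0 => m _.
have -> : \sum_i \sum_j w i * w j * exp_coeff (t * a i * a j) m
   = t ^+ m / m`!%:R * ((\sum_i w i * a i ^+ m) * (\sum_j w j * a j ^+ m)).
  rewrite mulr_suml big_distrr /=; apply: eq_bigr => i _.
  rewrite mulr_sumr big_distrr /=; apply: eq_bigr => j _.
  rewrite /exp_coeff /= !exprMn; ring.
by rewrite -expr2 mulr_ge0 ?sqr_ge0 // divr_ge0 ?exprn_ge0.
Unshelve. all: by end_near. Qed.
End S.



Section S.
Variable R : realType.

Lemma gauss_psd n (u a : 'I_n -> R) (c : R) : 0 < c ->
  0 <= \sum_i \sum_j u i * u j * expR (- ((a i - a j) ^+ 2) / c).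
Proof.
move=> c0.
have -> : \sum_i \sum_j u i * u j * expR (- ((a i - a j) ^+ 2) / c) =
  \sum_i \sum_j (u i * expR (- (a i ^+ 2) / c)) * (u j * expR (- (a j ^+ 2) / c))
     * expR ((2 / c) * a i * a j).
  apply: eq_bigr => i _; apply: eq_bigr => j _.
  have -> : - ((a i - a j) ^+ 2) / c = (- (a i ^+ 2) / c + - (a j ^+ 2) / c)
     + (2 / c) * a i * a j by rewrite /=; field; rewrite gt_eqF.
  rewrite !expRD; ring.
apply: exp_psd; by rewrite divr_ge0 // ltW.
Qed.

Lemma gram_psd d N (s : 'I_d -> R) (x : 'I_N -> 'rV[R]_d) (u : 'I_N -> R) :
  (forall j, 0 < s j) ->
  0 <= \sum_i \sum_j u i * u j * gram s x i j.
Proof.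
move=> s0.
have -> : \sum_i \sum_j u i * u j * gram s x i j =
  N%:R^-1 * \sum_(k < d) \sum_i \sum_j u i * u j *
     expR (- ((x i 0 k - x j 0 k) ^+ 2) / (2 * s k)).
  rewrite [RHS]big_distrr /=.
  under [RHS]eq_bigr do rewrite big_distrr /=.
  under [RHS]eq_bigr do under eq_bigr do rewrite big_distrr /=.
  rewrite [RHS]exchange_big /=; apply: eq_bigr => i _.
  rewrite [RHS]exchange_big /=; apply: eq_bigr => j _.
  rewrite mxE /addkernel mulr_suml mulr_sumr; apply: eq_bigr => k _.
  ring.
apply: mulr_ge0; first by rewrite invr_ge0 ler0n.
apply: sumr_ge0 => k _; apply: gauss_psd.
by rewrite mulr_gt0.
Qed.

Lemma eig_ge0 d N (s : 'I_d -> R) (x : 'I_N -> 'rV[R]_d) (mu : nat -> R) :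
  (forall j, 0 < s j) -> sorted_eigenvalues (gram s x) mu ->
  forall l, (1 <= l <= N)%N -> 0 <= mu l.
Proof.
move=> s0 [_ [U [UU GE]]] l /andP[l1 lN].
have li : (l.-1 < N)%N by case: l l1 lN.
pose i := Ordinal li.
have : (U *m gram s x *m U^T) i i = mu l.
  rewrite GE !mulmxA UU mul1mx -!mulmxA UU mulmx1 mxE mxE eqxx mulr1n.
  by rewrite /= prednK.
move=> <-.
rewrite mxE.
have -> : \sum_j (U *m gram s x) i j * U^T j i =
   \sum_j1 \sum_j2 U i j1 * U i j2 * gram s x j1 j2.
  rewrite exchange_big /=; apply: eq_bigr => j _.
  rewrite !mxE big_distrl /=; apply: eq_bigr => k _; rewrite !mxE; ring.
exact: gram_psd.
Qed.
End S.



Section S.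
Variable R : realType.

Lemma term_bnd (lam m mu : R) : 0 < lam -> 0 <= m -> 0 <= mu ->
  (0 <= 1 - (1 - mu/(mu+lam)) `^ m <= 1) /\
  1 - (1 - mu/(mu+lam)) `^ m <= m * (mu / lam).
Proof.
move=> l0 m0 u0.
have ml0 : 0 < mu + lam by lra.
have -> : 1 - mu/(mu+lam) = lam/(mu+lam) by field; rewrite gt_eqF.
have x0 : 0 < lam / (mu + lam) by rewrite divr_gt0.
have x1 : lam / (mu + lam) <= 1 by rewrite ler_pdivrMr // mul1r; lra.
have lnx : ln (lam / (mu + lam)) <= 0 by exact: ln_le0.
rewrite /powR gt_eqF //.
have e1 : expR (m * ln (lam / (mu + lam))) <= 1.
  by rewrite -expR0 ler_expR mulr_ge0_le0.
split; first by apply/andP; split; [lra| have := expR_ge0 (m * ln (lam / (mu + lam))); lra].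
have := expR_ge1Dx (m * ln (lam / (mu + lam))).
have : - ln (lam / (mu + lam)) <= mu / lam.
  rewrite -lnV ?posrE // invf_div.
  have -> : (mu + lam) / lam = 1 + mu / lam by field; rewrite gt_eqF.
  apply: le_ln1Dx; have : 0 <= mu / lam by rewrite divr_ge0 // ltW.
  lra.
move=> h1 h2.
have : m * (- ln (lam / (mu + lam))) <= m * (mu / lam) by rewrite ler_wpM2l.
lra.
Qed.

Lemma sumsq_le (r : seq nat) (f : nat -> R) : (forall i, i \in r -> 0 <= f i) ->
  \sum_(i <- r) f i ^+ 2 <= (\sum_(i <- r) f i) ^+ 2.
Proof.
elim: r => [|a r IH] H; first by rewrite !big_nil expr0n.
rewrite !big_cons.
have ha : 0 <= f a by apply: H; rewrite inE eqxx.
have hr : 0 <= \sum_(i <- r) f i.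
  by rewrite big_seq; apply: sumr_ge0 => i ir; apply: H; rewrite inE ir orbT.
have := IH (fun i ir => H i ltac:(by rewrite inE ir orbT)).
have : 0 <= f a * \sum_(i <- r) f i by apply: mulr_ge0.
rewrite !expr2; lra.
Qed.

Lemma geom_le (q : R) (K n : nat) : 0 <= q < 1 ->
  \sum_(K <= k < n) q ^+ k <= q ^+ K / (1 - q).
Proof.
move=> /andP[q0 q1].
have qK : 0 <= q ^+ K / (1 - q) by rewrite divr_ge0 ?exprn_ge0 //; lra.
have [nK|Kn] := leqP n K; first by rewrite big_geq.
have e : forall M, \sum_(K <= k < K + M) q ^+ k * (1 - q) = q ^+ K - q ^+ (K + M).
  elim => [|M IH]; first by rewrite addn0 big_geq // subrr.
  rewrite addnS big_nat_recr /= ?leq_addr // IH.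
  rewrite exprSr; ring.
have -> : n = (K + (n - K))%N by rewrite subnKC // ltnW.
rewrite ler_pdivlMr; last lra.
rewrite big_distrl /= e; have := exprn_ge0 (K + (n - K)) q0; lra.
Qed.

End S.



Section S.
Variable R : realType.

Lemma exp_half_ge (L : R) : 0 <= L -> L ^+ 2 / 16 <= expR (L / 2).
Proof.
move=> L0.
have -> : L / 2 = L / 4 + L / 4 by field.
rewrite expRD.
have h := expR_ge1Dx (L / 4).
have h0 : 0 <= 1 + L / 4 by lra.
have : (1 + L / 4) * (1 + L / 4) <= expR (L / 4) * expR (L / 4) by apply: ler_pM.
rewrite expr2; nra.
Qed.

Lemma final_ineq (lam Cu Cd L K : R) : 0 < lam -> 0 < Cu -> Cu < Cd -> 0 < L ->
  L / (2 * Cd + 1) - 1 < K -> K <= L / (2 * Cd + 1) ->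
  expR (- (L / 2)) * (K + (expR ((4^-1 * ((Cu + Cd + 2^-1) / (Cd + 1))) * L) / lam) ^+ 2
     * (expR (- (Cu * K)) / (1 - expR (- Cu))) ^+ 2)
  <= (16 / (2 * Cd + 1) + expR (2 * Cu) / (lam ^+ 2 * (1 - expR (- Cu)) ^+ 2 *
        ((2^-1 + Cu) / (2 * Cd + 2)))) / L.
Proof.
move=> l0 c0 cc L0 K1 K2.
set D := 2 * Cd + 1.
set a := 4^-1 * ((Cu + Cd + 2^-1) / (Cd + 1)).
set b := (2^-1 + Cu) / (2 * Cd + 2).
set q := expR (- Cu).
have D0 : 0 < D by rewrite /D; lra.
have b0 : 0 < b by rewrite /b divr_gt0 //; lra.
have q1 : q < 1 by rewrite /q -expR0 ltr_expR; lra.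
have q0 : 0 < 1 - q by lra.
rewrite mulrDr mulrDl.
apply: lerD.
  rewrite expRN.
  have eL := exp_half_ge L (ltW L0).
  have eL0 : 0 < expR (L / 2) := expR_gt0 _.
  have -> : (expR (L / 2))^-1 * K = (K * L * D) / (expR (L / 2) * L * D).
    by field; rewrite !gt_eqF.
  have -> : 16 / D / L = (16 * expR (L / 2)) / (expR (L / 2) * L * D).
    by field; rewrite !gt_eqF.
  rewrite ler_pM2r ?invr_gt0 ?mulr_gt0 //.
  have kd : K * D <= L by rewrite -ler_pdivlMr.
  have : K * D * L <= L * L by rewrite ler_wpM2r // ltW.
  move: eL; rewrite ler_pdivrMr ?ltr0n // expr2 => eL.
  have -> : K * L * D = K * D * L by ring.
  move=> h; apply: (le_trans h); lra.
set E := lam ^+ 2 * (1 - q) ^+ 2.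
have E0 : 0 < E by rewrite /E mulr_gt0 // exprn_gt0.
have -> : expR (- (L / 2)) * ((expR (a * L) / lam) ^+ 2 * (expR (- (Cu * K)) / (1 - q)) ^+ 2)
   = expR (- (L / 2) + 2 * a * L + - (2 * Cu * K)) / E.
  rewrite !expRD /E.
  have -> : 2 * a * L = a * L + a * L by ring.
  have -> : - (2 * Cu * K) = - (Cu * K) + - (Cu * K) by ring.
  rewrite !expRD; field; rewrite ?gt_eqF //; lra.
have ex : - (L / 2) + 2 * a * L + - (2 * Cu * K) <= 2 * Cu + - (b * L).
  have id : 2 * a - 2^-1 + b = 2 * Cu / (2 * Cd + 2).
    rewrite /a /b; field; apply/andP; split; rewrite gt_eqF //; lra.
  have h1 : 2 * Cu / (2 * Cd + 2) <= 2 * Cu / D.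
    rewrite ler_pM2l ?mulr_gt0 // lef_pV2 ?posrE /D; lra.
  have h2 : 2 * Cu * (L / D) - 2 * Cu < 2 * Cu * K.
    have : 2 * Cu * (L / D - 1) < 2 * Cu * K by rewrite ltr_pM2l ?mulr_gt0.
    lra.
  have h3 : L * (2 * Cu / (2 * Cd + 2)) <= L * (2 * Cu / D) by rewrite ler_wpM2l // ltW.
  have e4 : 2 * Cu * (L / D) = L * (2 * Cu / D) by rewrite /D; field; rewrite gt_eqF.
  have e5 : - (L / 2) + 2 * a * L + - (b * L) * (-1) = L * (2 * a - 2^-1 + b) by ring.
  rewrite id in e5.
  lra.
have bL0 : 0 < b * L by rewrite mulr_gt0.
apply: (@le_trans _ _ (expR (2 * Cu + - (b * L)) / E)).
  by rewrite ler_pM2r ?invr_gt0 // ler_expR.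
have hb : b * L <= expR (b * L) by have := expR_ge1Dx (b * L); lra.
have eb0 : 0 < expR (b * L) := expR_gt0 _.
have -> : expR (2 * Cu + - (b * L)) / E = expR (2 * Cu) / E / expR (b * L).
  by rewrite expRD expRN; field; rewrite !gt_eqF.
have -> : expR (2 * Cu) / (E * b) / L = expR (2 * Cu) / E / (b * L).
  by field; rewrite !gt_eqF.
by rewrite ler_pM2l ?(divr_gt0 (expR_gt0 _) E0) // lef_pV2 ?posrE.
Qed.

End S.



Theorem lemma7 (R : realType) (lam Cu Cd : R) (d : nat) (s : 'I_d -> R) :
  0 < lam -> 0 < Cu -> Cu < Cd -> (forall j, 0 < s j) ->
  exists eps : nat -> R, eps @ \oo --> 0 /\
    forall (N : nat) (x : 'I_N -> 'rV[R]_d) (mu : nat -> R),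
      sorted_eigenvalues (gram s x) mu ->
      \sum_(K0 Cd N <= k < N.+1) mu k
        <= \sum_(K0 Cd N <= k < N.+1) expR (- (Cu * k%:R)) ->
      expR (- (Cd * (K0 Cd N)%:R)) <= mu (K0 Cd N) ->
      effquant lam (mN Cu Cd N) N mu <= eps N.
Proof.
move=> l0 c0 cc s0.
set D := 2 * Cd + 1.
set q := expR (- Cu).
set b := (2^-1 + Cu) / (2 * Cd + 2).
set C1 := 16 / D + expR (2 * Cu) / (lam ^+ 2 * (1 - q) ^+ 2 * b).
set C := C1 + Num.sqrt (expR D) * D.
have D0 : 0 < D by rewrite /D; lra.
have b0 : 0 < b by rewrite /b divr_gt0 //; lra.
have q1 : q < 1 by rewrite /q -expR0 ltr_expR; lra.
have q0 : 0 < 1 - q by lra.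
have C10 : 0 <= C1.
  apply: addr_ge0; first by apply: divr_ge0; [rewrite ler0n | exact: ltW D0].
  apply: divr_ge0; first exact: expR_ge0.
  apply: mulr_ge0; last exact: ltW b0.
  by apply: mulr_ge0; apply: exprn_ge0; [exact: ltW l0 | exact: ltW q0].
have C0 : 0 <= C.
  apply: addr_ge0; first exact: C10.
  by apply: mulr_ge0; rewrite ?sqrtr_ge0 // ltW.
exists (fun N => if (N <= 1)%N then 1 else C / ln N%:R).
split.
  apply/cvgrPdist_lt => e e0.
  exists (maxn 2 (Num.truncn (expR (C / e))).+1) => // N /=.
  rewrite geq_max => /andP[N2 NT].
  have -> : (N <= 1)%N = false by rewrite leqNgt N2.
  have N1 : (1 : R) < N%:R by rewrite ltr1n.
  have Npos : (0 : R) < N%:R by lra.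
  have L0 : 0 < ln (N%:R : R) by apply: ln_gt0.
  have h1 : expR (C / e) < N%:R.
    apply: lt_le_trans (truncnS_gt _) _; by rewrite ler_nat.
  have h2 : C / e < ln (N%:R : R).
    by rewrite -ltr_ln ?posrE ?expR_gt0 // expRK in h1.
  rewrite sub0r normrN ger0_norm; last by rewrite divr_ge0 // ltW.
  rewrite ltr_pdivrMr //; rewrite ltr_pdivrMr // in h2; lra.
move=> N x mu hs hsum hlow.
have mu0 := @eig_ge0 R d N s x mu s0 hs.
set m := mN Cu Cd N.
have m0 : 0 <= m := powR_ge0 _ _.
have tb : forall l, (1 <= l <= N)%N ->
   0 <= (1 - (1 - mu l / (mu l + lam)) `^ m) ^+ 2 <= 1 /\
   (1 - (1 - mu l / (mu l + lam)) `^ m) ^+ 2 <= (m / lam) ^+ 2 * mu l ^+ 2.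
  move=> l hl; have [/andP[t0 t1] t2] := @term_bnd R lam m (mu l) l0 m0 (mu0 l hl).
  split; first by rewrite exprn_ge0 // exprn_ile1.
  have e : m / lam * mu l = m * (mu l / lam) by ring.
  have h0 : 0 <= m / lam * mu l.
    by rewrite e mulr_ge0 // divr_ge0 ?mu0 // ltW.
  by rewrite -exprMn ler_pXn2r ?nnegrE // e.
have gen : effquant lam m N mu <= Num.sqrt N%:R.
  rewrite /effquant.
  have hs1 : \sum_(1 <= l < N.+1) (1 - (1 - mu l / (mu l + lam)) `^ m) ^+ 2 <= N%:R.
    apply: le_trans (ler_sum_nat (G := fun=> 1) _) _ => [l /andP[l1 lN]|].
      by case: (tb l _) => [|/andP[_ h] _] //; rewrite l1 -ltnS.
    by rewrite sumr_const_nat subSS subn0.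
  apply: le_trans (ler_wpM2l _ hs1) _; first by rewrite invr_ge0 sqrtr_ge0.
  have [->|N0] := eqVneq N 0%N; first by rewrite sqrtr0 invr0 mul0r.
  have sN : 0 < Num.sqrt (N%:R : R) by rewrite sqrtr_gt0 ltr0n lt0n.
  by rewrite mulrC ler_pdivrMr // -expr2 sqr_sqrtr ?ler0n.
case: ifP => hN.
  apply: (le_trans gen); have h1 : N%:R <= 1 :> R by rewrite lern1 hN.
  by move/ler_wsqrtr: h1; rewrite sqrtr1.
have N2 : (1 < N)%N by rewrite ltnNge hN.
have N1 : (1 : R) < N%:R by rewrite ltr1n.
have Npos : (0 : R) < N%:R by rewrite ltr0n; apply: leq_trans N2.
set L := ln (N%:R : R).
have L0 : 0 < L by apply: ln_gt0.
have NL : N%:R = expR L by rewrite /L lnK // posrE.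
set K := K0 Cd N.
have LD0 : 0 <= L / D by rewrite divr_ge0 // ltW.
have K1 : K%:R <= L / D by rewrite /K /K0 truncn_le.
have K2 : L / D - 1 < K%:R.
  have := truncnS_gt (L / D); rewrite -addn1 natrD.
  rewrite /K /K0 -/L -/D; lra.
have LDL : L / D <= L.
  rewrite ler_pdivrMr //; have : 1 <= D by rewrite /D; lra.
  nra.
case: (posnP K) => [K00|Kp].
  have LD : L < D.
    move: K2; rewrite K00 mulr0n => K2.
    have : L / D < 1 by lra.
    by rewrite ltr_pdivrMr // mul1r.
  apply: le_trans gen _.
  rewrite ler_pdivlMr //.
  have hN' : N%:R <= expR D by rewrite NL ler_expR ltW.
  have h1 := ler_wsqrtr hN'.
  have : Num.sqrt N%:R * L <= Num.sqrt (expR D) * D.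
    by apply: ler_pM; rewrite ?sqrtr_ge0 // ltW.
  rewrite /C; lra.
have LN : L <= N%:R - 1.
  have h := @le_ln1Dx R (N%:R - 1) ltac:(lra).
  by rewrite addrC subrK in h.
have KN : (K <= N)%N by rewrite -(ler_nat R); lra.
rewrite /effquant (big_cat_nat _ (n := K)) //=; last by apply: leq_trans KN _.
have hA : \sum_(1 <= l < K) (1 - (1 - mu l / (mu l + lam)) `^ m) ^+ 2 <= K%:R.
  apply: le_trans (ler_sum_nat (G := fun=> 1) _) _ => [l /andP[l1 lK]|].
    case: (tb l _) => [|/andP[_ h] _] //; rewrite l1 /=.
    by apply: leq_trans KN; apply: ltnW.
  by rewrite sumr_const_nat ler_nat leq_subr.
have hS : \sum_(K <= k < N.+1) mu k <= q ^+ K / (1 - q).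
  apply: (le_trans hsum).
  under eq_bigr do rewrite -mulNr expRM_natr.
  by apply: (@geom_le R); rewrite expR_ge0.
have hS0 : 0 <= \sum_(K <= k < N.+1) mu k.
  rewrite big_seq; apply: sumr_ge0 => l; rewrite mem_index_iota => /andP[Kl lN].
  by apply: mu0; rewrite (leq_trans Kp Kl) -ltnS.
have hB : \sum_(K <= l < N.+1) (1 - (1 - mu l / (mu l + lam)) `^ m) ^+ 2
     <= (m / lam) ^+ 2 * (q ^+ K / (1 - q)) ^+ 2.
  apply: (@le_trans _ _ (\sum_(K <= l < N.+1) (m / lam) ^+ 2 * mu l ^+ 2)).
    apply: ler_sum_nat => l /andP[Kl lN].
    by case: (tb l _) => [|_ h] //; rewrite (leq_trans Kp Kl) -ltnS.
  rewrite -mulr_sumr; apply: ler_wpM2l; first by rewrite exprn_ge0 // divr_ge0 // ltW.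
  apply: le_trans (@sumsq_le R _ _ _) _.
    by move=> l; rewrite mem_index_iota => /andP[Kl lN]; apply: mu0; rewrite (leq_trans Kp Kl) -ltnS.
  by rewrite ler_pXn2r ?nnegrE // (le_trans hS0 hS).
have sq : Num.sqrt (N%:R : R) = expR (L / 2).
  by rewrite -powR12_sqrt ?ler0n // /powR gt_eqF // mulrC.
have mE : m = expR (4^-1 * ((Cu + Cd + 2^-1) / (Cd + 1)) * L).
  by rewrite /m /mN /powR gt_eqF.
have qE : q ^+ K = expR (- (Cu * K%:R)) by rewrite -mulNr expRM_natr.
apply: (@le_trans _ _ ((Num.sqrt N%:R)^-1 * (K%:R + (m / lam) ^+ 2 * (q ^+ K / (1 - q)) ^+ 2))).
  by rewrite ler_wpM2l ?invr_ge0 ?sqrtr_ge0 // lerD.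
rewrite sq -expRN mE qE.
apply: le_trans (@final_ineq R lam Cu Cd L K%:R l0 c0 cc L0 K2 K1) _.
by rewrite ler_pM2r ?invr_gt0 // /C lerDl mulr_ge0 ?sqrtr_ge0 // ltW.
Qed.
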